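(* Let $\phi:\mathbb{F}_2^n\to\mathbb{C}$ be a stabilizer state and $L=\mathcal{L}(\phi)$ its Lagrangian subspace. Then for every nonzero $f:\mathbb{F}_2^n\to\mathbb{C}$, $$\Big(\frac{|\langle f,\phi\rangle|}{\|f\|_2}\Big)^4\le P_f(L)\le\Big(\frac{\|f\|_{U^3}}{\|f\|_2}\Big)^4.$$
   Context: $\langle f,g\rangle=\mathbb{E}_xf(x)\overline{g(x)}$, $\|f\|_2=\langle f,f\rangle^{1/2}$, $\Delta_af(x)=f(x+a)\overline{f(x)}$, $\hat g(b)=\mathbb{E}_xg(x)(-1)^{b\cdot x}$, $\|f\|_{U^3}=(\mathbb{E}_{x,a,b,c}\Delta_a\Delta_b\Delta_cf(x))^{1/8}$. A stabilizer state is $\phi$ with $\|\phi\|_2=\|\phi\|_{U^3}=1$; for such $\phi$ there is a unique Lagrangian subspace $\mathcal{L}(\phi)\le\mathbb{F}_2^{2n}$ (maximal isotropic for $[(a,b),(c,d)]=a\cdot d+b\cdot c$) with $|\widehat{\Delta_a\phi}(b)|=\mathbf{1}_{\mathcal{L}(\phi)}(a,b)$. The characteristic distribution of nonzero $f$ is the probability distribution $P_f(a,b)=|\widehat{\Delta_af}(b)|^2/(2^n\|f\|_2^4)$ on $\mathbb{F}_2^{2n}$, and $P_f(L)=\sum_{(a,b)\in L}P_f(a,b)$. *)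

(* Defs.v *)
From mathcomp Require Import all_boot all_algebra.
From mathcomp Require Import reals complex.
Set Implicit Arguments. Unset Strict Implicit. Unset Printing Implicit Defensive.
Import GRing.Theory Num.Theory Num.Def.
Local Open Scope ring_scope.

Section Stabilizer.
Variable R : realType.
Local Notation C := R[i].
Variable n : nat.

Definition vec := 'rV['F_2]_n.

Definition dot (a x : vec) : 'F_2 := (a *m x^T) 0 0.

Definition sgnF2 (t : 'F_2) : C := if t == 0 then 1 else -1.

Definition avg (g : vec -> C) : C := (2%:R ^+ n)^-1 * \sum_(x : vec) g x.

Definition inner (f g : vec -> C) : C := avg (fun x => f x * (g x)^*).

Definition norm2 (f : vec -> C) : C := sqrtC (inner f f).

Definition Delta (a : vec) (f : vec -> C) : vec -> C :=
  fun x => f (x + a) * (f x)^*.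

Definition fourier (g : vec -> C) (b : vec) : C :=
  avg (fun x => g x * sgnF2 (dot b x)).

Definition U3norm (f : vec -> C) : C :=
  8.-root (avg (fun x => avg (fun a => avg (fun b => avg (fun c =>
     Delta a (Delta b (Delta c f)) x))))).

Definition stabilizer_state (phi : vec -> C) : Prop :=
  norm2 phi = 1 /\ U3norm phi = 1.

Definition symp (u v : vec * vec) : 'F_2 := dot u.1 v.2 + dot u.2 v.1.

(* subspaces of F_2^(2n) (over F_2 closure under + and 0 suffices) *)
Definition is_subspace (L : {set vec * vec}) : Prop :=
  (0, 0) \in L /\ (forall u v, u \in L -> v \in L -> (u.1 + v.1, u.2 + v.2) \in L).

Definition isotropic (L : {set vec * vec}) : Prop :=
  forall u v, u \in L -> v \in L -> symp u v = 0.

Definition lagrangian (L : {set vec * vec}) : Prop :=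
  [/\ is_subspace L, isotropic L &
      forall L' : {set vec * vec}, is_subspace L' -> isotropic L' ->
        L \subset L' -> L' = L].

Definition is_lagrangian_of (phi : vec -> C) (L : {set vec * vec}) : Prop :=
  lagrangian L /\
  forall a b : vec, `|fourier (Delta a phi) b| = ((a, b) \in L)%:R.

Definition charP (f : vec -> C) (ab : vec * vec) : C :=
  `|fourier (Delta ab.1 f) ab.2| ^+ 2 / (2%:R ^+ n * norm2 f ^+ 4).

Definition charP_set (f : vec -> C) (L : {set vec * vec}) : C :=
  \sum_(ab in L) charP f ab.

End Stabilizer.

(* Main.v *)
Require Import Defs.
From mathcomp Require Import all_boot all_order all_algebra ring.
From mathcomp Require Import reals complex.
Set Implicit Arguments. Unset Strict Implicit. Unset Printing Implicit Defensive.
Import Order.TTheory GRing.Theory Num.Theory Num.Def.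
Local Open Scope ring_scope.

Lemma F2_cases (t : 'F_2) : t = 0 \/ t = 1.
Proof.
have : (val t < 2)%N by exact: (ltn_ord t).
case E: (val t) => [|[|//]] _; [left|right]; apply: val_inj; by rewrite E.
Qed.

Lemma F2_add_self (t : 'F_2) : t + t = 0.
Proof. by case: (F2_cases t) => ->; [rewrite addr0 | apply: val_inj]. Qed.

Section S.
Variable R : realType.
Local Notation C := R[i].
Variable n : nat.
Local Notation vec := (vec n).
Local Notation N := ((2%:R : C) ^+ n).

Lemma sgnD (s t : 'F_2) : sgnF2 R (s + t) = sgnF2 R s * sgnF2 R t.
Proof.
by case: (F2_cases s) => ->; case: (F2_cases t) => ->; rewrite /sgnF2 //= ?mul1r ?mulr1 ?mulN1r ?opprK.
Qed.

Lemma sgn_conj (f : {rmorphism C -> C}) (t : 'F_2) : f (sgnF2 R t) = sgnF2 R t.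
Proof. by rewrite /sgnF2; case: ifP => _; rewrite ?rmorph1 ?rmorphN1. Qed.

Lemma sgn0 : sgnF2 R 0 = 1. Proof. by rewrite /sgnF2 eqxx. Qed.
Lemma sgn1 : sgnF2 R 1 = -1. Proof. by rewrite /sgnF2. Qed.

Lemma dotDl (a b x : vec) : dot (a + b) x = dot a x + dot b x.
Proof. by rewrite /dot mulmxDl mxE. Qed.

Lemma dotC (a x : vec) : dot a x = dot x a.
Proof. by rewrite /dot -[x in (x *m _)]trmxK -trmx_mul mxE. Qed.

Lemma dotDr (a x y : vec) : dot a (x + y) = dot a x + dot a y.
Proof. by rewrite dotC dotDl !(dotC _ a). Qed.

Lemma vec_opp (y : vec) : - y = y.
Proof. apply/rowP => j; rewrite !mxE; apply/eqP; by rewrite eq_sym -addr_eq0 F2_add_self. Qed.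

Lemma vec_addK (x y : vec) : (x + y == 0) = (x == y).
Proof. by rewrite -[y in x + y]vec_opp subr_eq0. Qed.

Lemma card_vec : #|{: vec}| = (2 ^ n)%N.
Proof. by rewrite card_mx card_Fp // mul1n. Qed.

Lemma N_gt0 : 0 < N.
Proof. by rewrite exprn_gt0 // ltr0n. Qed.

Lemma N_neq0 : N != 0.
Proof. by rewrite gt_eqF ?N_gt0. Qed.

Lemma N_conj : N^* = N.
Proof. by rewrite -natrX conjC_nat. Qed.

Lemma ortho (z : vec) : \sum_(b : vec) sgnF2 R (dot b z) = if z == 0 then N else 0.
Proof.
case: eqP => [->|/eqP nz].
  rewrite (eq_bigr (fun _ => 1)) => [|b _]; last first.
    by rewrite /dot trmx0 mulmx0 mxE sgn0.
  by rewrite sumr_const card_vec -natrX.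
have [i Hi] : exists i, z 0 i != 0.
  case: (boolP [exists i, z 0 i != 0]) => [/existsP//|/existsPn H].
  case/eqP: nz; apply/rowP => j; rewrite mxE; exact/eqP/negbNE/H.
have zi : z 0 i = 1 by case: (F2_cases (z 0 i)) Hi => ->; rewrite ?eqxx.
set S := \sum_b _.
have eS : S = - S.
  rewrite {1}/S (reindex_inj (addIr (delta_mx 0 i))) /= /S -sumrN.
  apply: eq_bigr => b _; rewrite dotDl sgnD.
  have -> : dot (delta_mx 0 i) z = 1.
    by rewrite /dot -rowE mxE mxE zi.
  by rewrite sgn1 mulrN1.
have : S *+ 2 == 0 by rewrite mulr2n {2}eS subrr.
by rewrite mulrn_eq0 => /eqP.
Qed.

Lemma sgn_sq (t : 'F_2) : sgnF2 R t * sgnF2 R t = 1.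
Proof. by rewrite -sgnD F2_add_self sgn0. Qed.

Lemma charsum (x y : vec) :
  \sum_(b : vec) sgnF2 R (dot b x) * sgnF2 R (dot b y) = if x == y then N else 0.
Proof.
rewrite (eq_bigr (fun b => sgnF2 R (dot b (x + y)))) => [|b _]; last by rewrite dotDr sgnD.
by rewrite ortho vec_addK.
Qed.

Lemma eq_avg (g h : vec -> C) : (forall x, g x = h x) -> avg g = avg h.
Proof. by move=> E; rewrite /avg; congr (_ * _); apply: eq_bigr => x _. Qed.

Lemma avg_conj (g : vec -> C) : avg (fun x => (g x)^*) = (avg g)^*.
Proof. by rewrite /avg rmorphM fmorphV rmorphXn rmorph_nat rmorph_sum. Qed.

Lemma parseval (g h : vec -> C) :
  \sum_(b : vec) fourier g b * (fourier h b)^* = inner g h.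
Proof.
have E b : fourier g b * (fourier h b)^* = N^-1 * N^-1 *
   \sum_(x : vec) \sum_(y : vec) g x * (h y)^* * (sgnF2 R (dot b x) * sgnF2 R (dot b y)).
  rewrite /fourier /avg rmorphM fmorphV rmorphXn rmorph_nat rmorph_sum mulrACA big_distrl /=.
  congr (_ * _); apply: eq_bigr => x _; rewrite big_distrr /=.
  by apply: eq_bigr => y _; rewrite rmorphM sgn_conj mulrACA.
rewrite (eq_bigr _ (fun b _ => E b)) -big_distrr /= exchange_big /=.
rewrite (eq_bigr (fun x => N * (g x * (h x)^*))) => [|x _]; last first.
  rewrite exchange_big /= (eq_bigr (fun y => g x * (h y)^* * (if x == y then N else 0))) => [|y _]; last first.
    by rewrite -big_distrr /= charsum.
  rewrite (bigD1 x) //= eqxx big1 ?addr0 => [|y /negbTE]; first by rewrite mulrC.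
  by rewrite eq_sym => ->; rewrite mulr0.
by rewrite -big_distrr /= -mulrA mulKf ?N_neq0.
Qed.

Lemma shift_sum (H K : vec -> C) :
  \sum_(a : vec) \sum_(x : vec) H (x + a) * K x = (\sum_x H x) * (\sum_x K x).
Proof.
rewrite exchange_big big_distrr /=; apply: eq_bigr => x _.
rewrite -big_distrl /=; congr (_ * _).
by rewrite [RHS](reindex_inj (addrI x)).
Qed.

Lemma avg_exchange (G : vec -> vec -> C) :
  avg (fun x => avg (fun y => G x y)) = avg (fun y => avg (fun x => G x y)).
Proof.
rewrite /avg (eq_bigr (fun x => \sum_y N^-1 * G x y)) => [|x _]; last by rewrite big_distrr.
rewrite [in RHS](eq_bigr (fun y => \sum_x N^-1 * G x y)) => [|y _]; last by rewrite big_distrr.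
by rewrite exchange_big.
Qed.

Lemma shift_avg (H K : vec -> C) :
  avg (fun a => avg (fun x => H (x + a) * K x)) = avg H * avg K.
Proof. by rewrite /avg -big_distrr /= mulrA shift_sum mulrACA. Qed.

Lemma shift_fourier (g : vec -> C) (b xi : vec) :
  fourier (fun x => g (x + b)) xi = sgnF2 R (dot xi b) * fourier g xi.
Proof.
rewrite /fourier /avg [in RHS](reindex_inj (addIr b)) /= mulrCA.
congr (_ * _); rewrite big_distrr /=; apply: eq_bigr => x _.
rewrite dotDr sgnD mulrCA; congr (_ * _).
by rewrite mulrCA sgn_sq mulr1.
Qed.

Lemma conj_mulc (x y : C) : (x * y^*)^* = x^* * y.
Proof. by rewrite rmorphM /= conjCK. Qed.

Lemma sum_avg (X : vec -> C) : \sum_(a : vec) X a = N * avg X.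
Proof. by rewrite /avg mulrA mulfV ?N_neq0 // mul1r. Qed.

Lemma I1 (f g : vec -> C) :
  \sum_(a : vec) \sum_(b : vec) fourier (Delta a f) b * (fourier (Delta a g) b)^*
  = N * (inner f g * (inner f g)^*).
Proof.
rewrite (eq_bigr _ (fun a _ => parseval _ _)) sum_avg; congr (_ * _).
rewrite (eq_avg (h := fun a => avg (fun x => (fun y => f y * (g y)^*) (x + a) * (fun y => (f y)^* * g y) x)))
   => [|a]; last first.
  by apply: eq_avg => x; rewrite /Delta rmorphM /= conjCK mulrACA.
rewrite (shift_avg (fun y => f y * (g y)^*) (fun y => (f y)^* * g y)); congr (_ * _).
by rewrite /inner -avg_conj; apply: eq_avg => x; rewrite rmorphM /= conjCK mulrC.
Qed.

Lemma U2 (g : vec -> C) :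
  avg (fun x => avg (fun a => avg (fun b => Delta a (Delta b g) x)))
  = \sum_(xi : vec) `|fourier g xi| ^+ 4.
Proof.
rewrite avg_exchange (eq_avg (h := fun a => avg (fun b => avg (fun x => Delta a (Delta b g) x))))
  => [|a]; last by rewrite avg_exchange.
rewrite avg_exchange.
set u := fun xi => fourier g xi * (fourier g xi)^*.
have E0 b : avg (fun y => g (y + b) * (g y)^*) = N * fourier u b.
  change (inner (fun y => g (y + b)) g = N * fourier u b).
  rewrite -parseval (eq_bigr (fun xi => u xi * sgnF2 R (dot b xi))) => [|xi _]; last first.
    by rewrite shift_fourier /u dotC -mulrA mulrC.
  by rewrite /fourier /avg mulrA mulfV ?N_neq0 // mul1r.
have E b : avg (fun a => avg (fun x => Delta a (Delta b g) x))
   = (N * fourier u b) * (N * fourier u b)^*.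
  by rewrite /Delta (shift_avg (fun y => g (y + b) * (g y)^*) (fun y => (g (y + b) * (g y)^*)^*)) avg_conj E0.
rewrite (eq_avg E) /avg (eq_bigr (fun b => N * N * (fourier u b * (fourier u b)^*))) => [|b _]; last first.
  by rewrite rmorphM /= rmorphXn rmorph_nat mulrACA.
rewrite -big_distrr /= parseval /inner /avg -mulrA mulKf ?N_neq0 // mulVKf ?N_neq0 //.
by apply: eq_bigr => xi _; rewrite /u conj_mulc [_^* * _]mulrC -normCK -exprD.
Qed.

Lemma U3V (f : vec -> C) :
  avg (fun x => avg (fun a => avg (fun b => avg (fun c => Delta a (Delta b (Delta c f)) x))))
  = avg (fun c => \sum_(xi : vec) `|fourier (Delta c f) xi| ^+ 4).
Proof.
rewrite (eq_avg (h := fun x => avg (fun a => avg (fun c => avg (fun b => Delta a (Delta b (Delta c f)) x)))))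
  => [|x]; last by apply: eq_avg => a; rewrite avg_exchange.
rewrite (eq_avg (h := fun x => avg (fun c => avg (fun a => avg (fun b => Delta a (Delta b (Delta c f)) x)))))
  => [|x]; last by rewrite avg_exchange.
by rewrite avg_exchange; apply: eq_avg => c; exact: U2.
Qed.

End S.

Lemma CS (R : numDomainType) (I : finType) (A : {pred I}) (y : I -> R) : (forall i, 0 <= y i) ->
  (\sum_(i in A) y i) ^+ 2 <= #|A|%:R * \sum_(i in A) y i ^+ 2.
Proof.
move=> y0.
set S1 := \sum_(i in A) y i; set S2 := \sum_(i in A) y i ^+ 2.
have H : \sum_(i in A) \sum_(j in A) (y i - y j) ^+ 2 = (#|A|%:R * S2 - S1 ^+ 2) *+ 2.
  rewrite (eq_bigr (fun i => y i ^+ 2 *+ #|A| - (y i * S1) *+ 2 + S2)) => [|i _]; last first.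
    rewrite (eq_bigr (fun j => y i ^+ 2 - (y i * y j) *+ 2 + y j ^+ 2)) => [|j _]; last by rewrite sqrrB.
    by rewrite big_split sumrB /= sumr_const sumrMnl -big_distrr.
  rewrite big_split sumrB /= sumr_const !sumrMnl -big_distrl /= -/S2 -/S1.
  rewrite -mulr_natl; ring.
have : 0 <= (#|A|%:R * S2 - S1 ^+ 2) *+ 2.
  rewrite -H; apply: sumr_ge0 => i _; apply: sumr_ge0 => j _.
  by apply: real_exprn_even_ge0 => //; apply: realB; apply: ger0_real.
by rewrite pmulrn_lge0 // subr_ge0.
Qed.

Lemma sub_sum_le (R : numDomainType) (I : finType) (A : {pred I}) (g : I -> R) :
  (forall i, 0 <= g i) -> \sum_(i in A) g i <= \sum_i g i.
Proof.
move=> g0; rewrite [X in _ <= X](bigID (mem A)) /= lerDl.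
by apply: sumr_ge0 => i _.
Qed.

Lemma sq_le (R : numDomainType) (x y : R) : 0 <= x -> 0 <= y -> x ^+ 2 <= y ^+ 2 -> x <= y.
Proof. by move=> hx hy; rewrite ler_pXn2r // ?nnegrE. Qed.

Unset Implicit Arguments.

Theorem lemma2p17 (R : realType) (n : nat) (phi : vec n -> R[i])
    (L : {set vec n * vec n}) :
  stabilizer_state phi -> is_lagrangian_of phi L ->
  forall f : vec n -> R[i], (exists x, f x != 0) ->
    (`|inner f phi| / norm2 f) ^+ 4 <= charP_set f L /\
    charP_set f L <= (U3norm f / norm2 f) ^+ 4.
Proof.
move=> [nphi _] [_ HL] f [x0 hx0].
pose N := (2%:R : R[i]) ^+ n.
have Ngt0 : 0 < N := N_gt0 R n.
have Nn0 : N != 0 := N_neq0 R n.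
have inner_phi : inner phi phi = 1.
  have : norm2 phi ^+ 2 = 1 by rewrite nphi expr1n.
  by rewrite /norm2 sqrtCK.
have cardL : #|L|%:R = N.
  rewrite /N; have := I1 phi phi; rewrite inner_phi rmorph1 !mulr1 pair_bigA /= => <-.
  rewrite (eq_bigr (fun ab => if ab \in L then 1 else 0)) => [|[a b] _]; last first.
    by rewrite /= -normCK HL; case: (_ \in L); rewrite ?expr1n ?expr0n.
  by rewrite -big_mkcond sumr_const.
set T := \sum_(ab in L) `|fourier (Delta ab.1 f) ab.2| ^+ 2.
have cP : charP_set f L = T / (N * norm2 f ^+ 4).
  by rewrite /charP_set /charP -big_distrl.
have qgt0 : 0 < inner f f.
  rewrite /inner /avg mulr_gt0 ?invr_gt0 //.
  rewrite (bigD1 x0) //= -normCK; apply: ltr_pwDl.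
    by rewrite exprn_gt0 // normr_gt0.
  by apply: sumr_ge0 => x _; rewrite -normCK exprn_ge0.
have nfgt0 : 0 < norm2 f by rewrite /norm2 sqrtC_gt0.
have nf4 : 0 < norm2 f ^+ 4 by rewrite exprn_gt0.
have Tge0 : 0 <= T by apply: sumr_ge0 => ab _; rewrite exprn_ge0.
rewrite cP.
have -> : T / (N * norm2 f ^+ 4) = T / N / norm2 f ^+ 4 by rewrite invfM mulrA.
rewrite !expr_div_n; split.
  apply: ler_wpM2r; first by rewrite invr_ge0 ltW.
  rewrite ler_pdivlMr // mulrC.
  set ip := inner f phi.
  have key1 : N * `|ip| ^+ 2 <= \sum_(ab in L) `|fourier (Delta ab.1 f) ab.2|.
    have := I1 f phi; rewrite -normCK pair_bigA /= => E.
    rewrite -[N * _]ger0_norm; last by apply: mulr_ge0; [exact: ltW | rewrite exprn_ge0].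
    rewrite /N -E; apply: le_trans (ler_norm_sum _ _ _) _.
    rewrite [X in _ <= X]big_mkcond /=; apply: ler_sum => -[a b] _ /=.
    by rewrite normrM norm_conjC HL; case: (_ \in L); rewrite ?mulr1 ?mulr0.
  have key2 : (N * `|ip| ^+ 2) ^+ 2 <= N * T.
    apply: (le_trans (y := (\sum_(ab in L) `|fourier (Delta ab.1 f) ab.2|) ^+ 2)).
      rewrite ler_pXn2r // nnegrE; last by apply: sumr_ge0 => ab _.
      by apply: mulr_ge0; [exact: ltW | rewrite exprn_ge0].
    rewrite -cardL; exact: CS.
  have e : (N * `|ip| ^+ 2) ^+ 2 = N * (N * `|ip| ^+ 4) by ring.
  by move: key2; rewrite e ler_pM2l.
apply: ler_wpM2r; first by rewrite invr_ge0 ltW.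
rewrite ler_pdivrMr // mulrC.
set W := \sum_(c : vec n) \sum_(xi : vec n) `|fourier (Delta c f) xi| ^+ 4.
have Wge0 : 0 <= W by apply: sumr_ge0 => c _; apply: sumr_ge0 => xi _; rewrite exprn_ge0.
have U8 : (U3norm f ^+ 4) ^+ 2 = N^-1 * W.
  rewrite -exprM; exact: (etrans (rootCK _ _) (U3V _)).
have Uge0 : 0 <= U3norm f.
  by rewrite /U3norm rootC_ge0 // U3V /avg mulr_ge0 // invr_ge0 ltW.
apply: sq_le => //; first by apply: mulr_ge0; [exact: ltW | rewrite exprn_ge0].
rewrite exprMn U8 [N ^+ 2]expr2 -mulrA mulVKf //.
apply: le_trans (CS _ _) _ => [ab|]; first exact: exprn_ge0.
rewrite cardL; apply: ler_wpM2l; first exact: ltW.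
apply: le_trans (sub_sum_le _ _) _ => [ab|]; first by rewrite !exprn_ge0.
rewrite /W pair_bigA; apply: ler_sum => ab _; by rewrite -exprM.
Qed.
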